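(* Let $K,G,m_0,A_g,B_g,\bar f_c,\bar f_t>0$, $m_g'(p)=A_g e^{\frac{p-\bar f_t/3}{B_g\bar f_c}}$, and let $p^{tr}\in\mathbb R$, $\varrho^{tr}\ge0$. For each $\gamma\ge0$ consider the equations $$p_\gamma+\gamma K\frac{m_g'(p_\gamma)}{\bar f_c}-p^{tr}=0,\qquad \varrho_\gamma-\Big[\varrho^{tr}-\gamma2G\Big(\frac{3\varrho_\gamma}{\bar f_c^2}+\frac{m_0}{\sqrt6\bar f_c}\Big)\Big]^+=0.$$ Then the maps $\hat p_{tr}:\gamma\mapsto p_\gamma$ and $\hat\varrho_{tr}:\gamma\mapsto\varrho_\gamma$ are well defined on $\mathbb R_+$ (each equation has a unique real solution). Moreover, $\hat p_{tr}$ is smooth and decreasing on $\mathbb R_+$, $\hat\varrho_{tr}$ is decreasing on $\big[0,\frac{\sqrt6\bar f_c\varrho^{tr}}{2Gm_0}\big)$, and $$\hat\varrho_{tr}(\gamma)=\frac{1}{1+\gamma\frac{6G}{\bar f_c^2}}\Big(\varrho^{tr}-\gamma\frac{2Gm_0}{\sqrt6\bar f_c}\Big)^+\quad\forall\gamma\ge0.$$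
   Context: $\mathbb R_+=[0,\infty)$; $(x)^+=\max\{0,x\}$. *)

(* Defs.v *)
From Stdlib Require Import Reals.
From Coquelicot Require Import Coquelicot.
Open Scope R_scope.

Definition pos_part (x : R) : R := Rmax 0 x.

Definition mgp (Ag Bg fc ft : R) (p : R) : R :=
  Ag * exp ((p - ft / 3) / (Bg * fc)).

Definition eq_p (K Ag Bg fc ft ptr gamma p : R) : Prop :=
  p + gamma * K * mgp Ag Bg fc ft p / fc - ptr = 0.

Definition eq_rho (G m0 fc rtr gamma rho : R) : Prop :=
  rho - pos_part (rtr - gamma * 2 * G * (3 * rho / fc ^ 2 + m0 / (sqrt 6 * fc))) = 0.

(* f is smooth (C^infinity) on R_+ = [0,oo): it agrees on [0,oo) with a
   function that is infinitely differentiable on an open neighbourhood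
   (-eps, oo) of [0,oo). *)
Definition smooth_on_Rplus (f : R -> R) : Prop :=
  exists (eps : R) (g : R -> R), 0 < eps /\
    (forall x, 0 <= x -> g x = f x) /\
    (forall (k : nat) (x : R), - eps < x -> ex_derive (Derive_n g k) x).

Definition decreasing_on (D : R -> Prop) (f : R -> R) : Prop :=
  forall x y, D x -> D y -> x < y -> f y < f x.

(* Main.v *)
Require Import Defs.
From Stdlib Require Import Reals Lra Ranalysis5 ClassicalEpsilon.
From Coquelicot Require Import Coquelicot.
Open Scope R_scope.

Definition kf (ptr b C p : R) : R := (p - ptr) * C * exp (- (p / b)).
Definition kd (ptr b C p : R) : R := C * exp (- (p / b)) * (ptr + b - p) / b.

Lemma kf_deriv ptr b C p : 0 < b -> is_derive (kf ptr b C) p (kd ptr b C p).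
Proof.
  intros hb. unfold kf, kd. auto_derive; [easy|]. idtac.
unfold Rdiv. field. lra.
Qed.

Lemma kd_pos ptr b C p : 0 < b -> 0 < C -> p < ptr + b -> 0 < kd ptr b C p.
Proof.
  intros hb hC hp. unfold kd. apply Rdiv_lt_0_compat; [|lra].
  apply Rmult_lt_0_compat; [apply Rmult_lt_0_compat; [lra| apply exp_pos]| lra].
Qed.

Lemma kf_incr ptr b C x y : 0 < b -> 0 < C -> x < y -> y < ptr + b ->
  kf ptr b C x < kf ptr b C y.
Proof.
  intros hb hC hxy hy.
  apply (incr_function (kf ptr b C) m_infty (Finite (ptr + b)) (kd ptr b C)); simpl; auto.
  - intros z _ _. apply kf_deriv; lra.
  - intros z _ hz. apply kd_pos; lra.
Qed.

Lemma kf_cont ptr b C : 0 < b -> continuity (kf ptr b C).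
Proof.
  intros hb x. apply continuity_pt_filterlim. apply (ex_derive_continuous (V:=R_NormedModule)).
  eexists. apply kf_deriv; lra.
Qed.

Lemma kf_low ptr b C s : 0 < b -> 0 < C -> exists lb, lb < ptr /\ kf ptr b C lb < s.
Proof.
  intros hb hC.
  set (E1 := C * exp (- (ptr / b))).
  assert (hE1 : 0 < E1) by (apply Rmult_lt_0_compat; [lra|apply exp_pos]).
  exists (ptr - 1 - Rabs s / E1). split.
  - assert (0 <= Rabs s / E1) by (apply Rdiv_le_0_compat; [apply Rabs_pos|lra]). lra.
  - unfold kf. set (lb := ptr - 1 - Rabs s / E1).
    assert (hl : lb - ptr = - 1 - Rabs s / E1) by (unfold lb; ring).
    assert (he : exp (- (ptr / b)) <= exp (- (lb / b))).
    { left; apply exp_increasing. assert (lb < ptr).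
      { assert (0 <= Rabs s / E1) by (apply Rdiv_le_0_compat; [apply Rabs_pos|lra]). lra. }
      apply Ropp_lt_contravar. unfold Rdiv. apply Rmult_lt_compat_r.
      apply Rinv_0_lt_compat; lra. lra. }
    assert (h1 : (lb - ptr) * C * exp (- (lb / b)) <= (lb - ptr) * E1).
    { unfold E1. rewrite Rmult_assoc. apply Rmult_le_compat_neg_l.
      rewrite hl. assert (0 <= Rabs s / E1) by (apply Rdiv_le_0_compat; [apply Rabs_pos|lra]). lra.
      apply Rmult_le_compat_l; lra. }
    assert (h2 : (lb - ptr) * E1 = - E1 - Rabs s) by (rewrite hl; field; lra).
    pose proof (Rle_abs (-s)). rewrite Rabs_Ropp in H. lra.
Qed.

Lemma kf_exists ptr b C s : 0 < b -> 0 < C -> s < kf ptr b C (ptr + b) ->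
  exists p, p < ptr + b /\ kf ptr b C p = s.
Proof.
  intros hb hC hs. destruct (kf_low ptr b C s hb hC) as [lb [hl hk]].
  destruct (IVT_gen (kf ptr b C) lb (ptr + b) s (kf_cont ptr b C hb)) as [p [hp1 hp2]].
  - rewrite Rmin_left, Rmax_right; lra.
  - exists p. rewrite Rmax_right in hp1 by lra. split; [|easy].
    destruct (Rle_lt_or_eq_dec p (ptr + b)) as [h|h]; [lra|easy|]. subst p. lra.
Qed.

Lemma kf_inj ptr b C p q : 0 < b -> 0 < C -> p < ptr + b -> q < ptr + b ->
  kf ptr b C p = kf ptr b C q -> p = q.
Proof.
  intros hb hC hp hq he. destruct (Rtotal_order p q) as [h|[h|h]]; auto.
  - pose proof (kf_incr ptr b C p q hb hC h hq). lra.
  - pose proof (kf_incr ptr b C q p hb hC h hp). lra.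
Qed.

Definition Gf (ptr b C s : R) : R :=
  epsilon (inhabits 0) (fun p => p < ptr + b /\ kf ptr b C p = s).

Lemma Gf_spec ptr b C s : 0 < b -> 0 < C -> s < kf ptr b C (ptr + b) ->
  Gf ptr b C s < ptr + b /\ kf ptr b C (Gf ptr b C s) = s.
Proof.
  intros hb hC hs. unfold Gf. apply epsilon_spec. apply kf_exists; auto.
Qed.

Lemma Gf_incr ptr b C s t : 0 < b -> 0 < C -> s < t -> t < kf ptr b C (ptr + b) ->
  Gf ptr b C s < Gf ptr b C t.
Proof.
  intros hb hC hst ht.
  destruct (Gf_spec ptr b C s hb hC ltac:(lra)) as [h1 h2].
  destruct (Gf_spec ptr b C t hb hC ltac:(lra)) as [h3 h4].
  destruct (Rlt_or_le (Gf ptr b C s) (Gf ptr b C t)) as [h|h]; auto.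
  destruct h as [h|h].
  - pose proof (kf_incr ptr b C _ _ hb hC h h1). lra.
  - rewrite <- h in h2. lra.
Qed.

Lemma Gf_le ptr b C s t : 0 < b -> 0 < C -> s <= t -> t < kf ptr b C (ptr + b) ->
  Gf ptr b C s <= Gf ptr b C t.
Proof.
  intros hb hC [h|h] ht. left; apply Gf_incr; auto. subst; lra.
Qed.

Definition kf_derivable ptr b C (hb : 0 < b) : derivable (kf ptr b C) :=
  fun x => exist _ (kd ptr b C x) (proj1 (is_derive_Reals _ _ _) (kf_deriv ptr b C x hb)).

Lemma Gf_deriv ptr b C s0 : 0 < b -> 0 < C -> s0 < kf ptr b C (ptr + b) ->
  is_derive (Gf ptr b C) s0 (/ kd ptr b C (Gf ptr b C s0)).
Proof.
  intros hb hC hs.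

  set (ls := s0 - 1). set (us := (s0 + kf ptr b C (ptr + b)) / 2).
  assert (hls : ls < s0) by (unfold ls; lra).
  assert (hus1 : s0 < us) by (unfold us; lra). assert (hus2 : us < kf ptr b C (ptr + b)) by (unfold us; lra).
  assert (Hfg : forall x, ls <= x <= us -> kf ptr b C (Gf ptr b C x) = x).
  { intros x hx. apply Gf_spec; auto. lra. }
  assert (Hcont : continuity_pt (Gf ptr b C) s0).
  { apply (continuity_pt_recip_interv (kf ptr b C) (Gf ptr b C) (Gf ptr b C ls) (Gf ptr b C us)).
    - apply Gf_incr; auto; lra.
    - intros x y hx hxy hy. apply kf_incr; auto.
      destruct (Gf_spec ptr b C us hb hC ltac:(lra)). lra.
    - intros x h1 h2. rewrite (Hfg ls) in h1 by lra. rewrite (Hfg us) in h2 by lra.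
      unfold comp, id. apply Hfg. lra.
    - intros x h1 h2. rewrite (Hfg ls) in h1 by lra. rewrite (Hfg us) in h2 by lra.
      split; apply Gf_le; auto; lra.
    - intros a _. apply kf_cont; auto.
    - rewrite (Hfg ls), (Hfg us) by lra. lra. }
  assert (Hincr : Gf ptr b C ls <= Gf ptr b C s0 <= Gf ptr b C us).
  { split; apply Gf_le; auto; lra. }
  pose proof (derivable_pt_lim_recip_interv (kf ptr b C) (Gf ptr b C) ls us s0
     (fun a _ => kf_derivable ptr b C hb a) Hcont ltac:(lra) ltac:(lra) Hincr) as H.
  assert (hd : forall pr, derive_pt (kf ptr b C) (Gf ptr b C s0) pr = kd ptr b C (Gf ptr b C s0)).
  { intros pr. apply derive_pt_eq_0. apply is_derive_Reals. apply kf_deriv; auto. }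
  assert (hpos : 0 < kd ptr b C (Gf ptr b C s0)).
  { apply kd_pos; auto. apply Gf_spec; auto. }
  apply is_derive_Reals. rewrite hd in H.
  replace (/ kd ptr b C (Gf ptr b C s0)) with (1 / kd ptr b C (Gf ptr b C s0)) by (unfold Rdiv; ring).
  apply H.
  - intros x hx. unfold comp, id. apply Hfg; lra.
  - lra.
Qed.

Inductive ex : Type :=
| EC (r : R) | EV | EE | EI | EA (e1 e2 : ex) | EM (e1 e2 : ex).

Fixpoint ev (b c : R) (e : ex) (p : R) : R :=
  match e with
  | EC r => r
  | EV => p
  | EE => exp (p / b)
  | EI => / (c - p)
  | EA e1 e2 => ev b c e1 p + ev b c e2 p
  | EM e1 e2 => ev b c e1 p * ev b c e2 p
  end.

Fixpoint dv (b : R) (e : ex) : ex :=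
  match e with
  | EC _ => EC 0
  | EV => EC 1
  | EE => EM (EC (/ b)) EE
  | EI => EM EI EI
  | EA e1 e2 => EA (dv b e1) (dv b e2)
  | EM e1 e2 => EA (EM (dv b e1) e2) (EM e1 (dv b e2))
  end.

Lemma ev_deriv b c e p : 0 < b -> p < c -> is_derive (ev b c e) p (ev b c (dv b e) p).
Proof.
  intros hb hp. induction e; simpl.
  - auto_derive; easy.
  - auto_derive; easy.
  - auto_derive; [easy|]. unfold Rdiv. ring.
  - auto_derive; [lra|]. field. lra.
  - apply (is_derive_plus (ev b c e1) (ev b c e2)); auto.
  - apply (is_derive_mult (ev b c e1) (ev b c e2)); auto.
    intros; apply Rmult_comm.
Qed.

Definition phiE (b C : R) : ex := EM (EC (- (b / C))) (EM EE EI).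
Fixpoint dn (b C : R) (n : nat) : ex :=
  match n with O => EV | S n => EM (dv b (dn b C n)) (phiE b C) end.
Definition gg ptr b C (x : R) : R := Gf ptr b C (- x).

Lemma gg_spec ptr b C x : 0 < b -> 0 < C -> - kf ptr b C (ptr + b) < x ->
  gg ptr b C x < ptr + b /\ kf ptr b C (gg ptr b C x) = - x.
Proof. intros. apply Gf_spec; auto; lra. Qed.

Lemma gg_deriv ptr b C x : 0 < b -> 0 < C -> - kf ptr b C (ptr + b) < x ->
  is_derive (gg ptr b C) x (ev b (ptr + b) (phiE b C) (gg ptr b C x)).
Proof.
  intros hb hC hx. destruct (gg_spec ptr b C x hb hC hx) as [h1 _].
  unfold gg.
  pose proof (is_derive_comp (Gf ptr b C) (fun y => - y) x _ (-1)
     (Gf_deriv ptr b C (- x) hb hC ltac:(lra))) as H.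
  unfold gg in h1. set (p := Gf ptr b C (- x)) in *.
  replace (ev b (ptr + b) (phiE b C) p) with (scal (-1) (/ kd ptr b C p)).
  apply H. auto_derive; [easy|ring].
  simpl. unfold kd. rewrite exp_Ropp.
  unfold scal; simpl; unfold mult; simpl.
  assert (0 < exp (p / b)) by apply exp_pos.
  field. repeat split; lra.
Qed.

Lemma gg_step ptr b C n : 0 < b -> 0 < C ->
  (forall y, - kf ptr b C (ptr + b) < y ->
     Derive_n (gg ptr b C) n y = ev b (ptr + b) (dn b C n) (gg ptr b C y)) ->
  forall x, - kf ptr b C (ptr + b) < x ->
  is_derive (Derive_n (gg ptr b C) n) x (ev b (ptr + b) (dn b C (S n)) (gg ptr b C x)).
Proof.
  intros hb hC IH x hx.
  apply is_derive_ext_loc with (f := fun t => ev b (ptr + b) (dn b C n) (gg ptr b C t)).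
  - apply (locally_interval _ x (Finite (- kf ptr b C (ptr + b))) p_infty); simpl; auto.
    intros y hy _. symmetry. apply IH; auto.
  - destruct (gg_spec ptr b C x hb hC hx) as [h1 _].
    pose proof (is_derive_comp (ev b (ptr + b) (dn b C n)) (gg ptr b C) x _ _
       (ev_deriv b (ptr + b) (dn b C n) (gg ptr b C x) hb h1) (gg_deriv ptr b C x hb hC hx)) as H.
    simpl. unfold scal in H; simpl in H; unfold mult in H; simpl in H.
    rewrite Rmult_comm. exact H.
Qed.

Lemma gg_Dn ptr b C n : 0 < b -> 0 < C -> forall x, - kf ptr b C (ptr + b) < x ->
  Derive_n (gg ptr b C) n x = ev b (ptr + b) (dn b C n) (gg ptr b C x).
Proof.
  intros hb hC. induction n as [|n IH]; intros x hx.
  - reflexivity.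
  - simpl Derive_n. apply is_derive_unique. apply gg_step; auto.
Qed.

Lemma gg_smooth ptr b C : 0 < b -> 0 < C -> forall (k : nat) (x : R),
  - kf ptr b C (ptr + b) < x -> ex_derive (Derive_n (gg ptr b C) k) x.
Proof.
  intros hb hC k x hx. eexists. apply gg_step; auto. intros; apply gg_Dn; auto.
Qed.

Lemma kf_c_pos ptr b C : 0 < b -> 0 < C -> 0 < kf ptr b C (ptr + b).
Proof.
  intros hb hC. unfold kf. replace (ptr + b - ptr) with b by ring.
  apply Rmult_lt_0_compat; [apply Rmult_lt_0_compat; lra| apply exp_pos].
Qed.

Lemma kf_nonpos ptr b C p : 0 < b -> 0 < C -> kf ptr b C p <= 0 -> p <= ptr.
Proof.
  intros hb hC h. unfold kf in h. destruct (Rle_or_lt p ptr) as [h'|h']; auto.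
  assert (0 < (p - ptr) * C * exp (- (p / b))).
  { apply Rmult_lt_0_compat; [apply Rmult_lt_0_compat; lra| apply exp_pos]. }
  lra.
Qed.

Lemma eqp_iff K Ag Bg fc ft ptr g p : 0 < K -> 0 < Ag -> 0 < Bg -> 0 < fc ->
  (eq_p K Ag Bg fc ft ptr g p <->
   kf ptr (Bg * fc) (fc * exp (ft / 3 / (Bg * fc)) / (K * Ag)) p = - g).
Proof.
  intros hK hA hB hf. unfold eq_p, mgp, kf.
  set (b := Bg * fc). assert (hb : 0 < b) by (unfold b; nra).
  set (E := exp ((p - ft / 3) / b)). assert (hE : 0 < E) by apply exp_pos.
  assert (H1 : exp (- (p / b)) * exp (ft / 3 / b) * E = 1).
  { unfold E. rewrite <- !exp_plus. replace (- (p / b) + ft / 3 / b + (p - ft / 3) / b) with 0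
      by (field; lra). apply exp_0. }
  assert (H2 : (p - ptr) * (fc * exp (ft / 3 / b) / (K * Ag)) * exp (- (p / b))
             = (p - ptr) * fc / (K * Ag * E)).
  { apply (Rmult_eq_reg_r (K * Ag * E)); [|apply Rgt_not_eq; apply Rmult_lt_0_compat; [nra|lra]].
    transitivity ((p - ptr) * fc * (exp (- (p / b)) * exp (ft / 3 / b) * E)).
    - field. lra.
    - rewrite H1. field. split; lra. }
  rewrite H2. split; intro H.
  - apply (Rmult_eq_reg_r (K * Ag * E)); [|apply Rgt_not_eq; apply Rmult_lt_0_compat; [nra|lra]].
    assert (Hp : p - ptr = - (g * K * (Ag * E) / fc)) by lra.
    rewrite Hp. field. repeat split; lra.
  - assert (H' : (p - ptr) * fc = - g * (K * Ag * E)).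
    { rewrite <- H. field. split; lra. }
    replace (g * K * (Ag * E)) with (- ((p - ptr) * fc)) by (rewrite H'; ring).
    field. lra.
Qed.

Lemma rho_iff a d r : 0 <= a ->
  (r - pos_part (d - a * r) = 0 <-> r = / (1 + a) * pos_part d).
Proof.
  intros ha. unfold pos_part. split; intro H.
  - destruct (Rle_or_lt 0 (d - a * r)) as [h|h].
    + rewrite Rmax_right in H by lra.
      assert (hr : r * (1 + a) = d) by lra.
      assert (0 <= r) by lra.
      rewrite Rmax_right by nra. rewrite <- hr. field. lra.
    + rewrite Rmax_left in H by lra. assert (r = 0) by lra. subst r.
      rewrite Rmax_left by lra. ring.
  - destruct (Rle_or_lt 0 d) as [h|h].
    + rewrite Rmax_right in H by lra.
      assert (hr : d - a * r = r) by (rewrite H; field; lra).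
      assert (0 <= r) by (rewrite H; apply Rmult_le_pos; [left; apply Rinv_0_lt_compat; lra|lra]).
      rewrite hr, Rmax_right by lra. ring.
    + rewrite Rmax_left in H by lra. rewrite H. rewrite Rmult_0_r, Rmult_0_r, Rminus_0_r.
      rewrite Rmax_left by lra. ring.
Qed.

Lemma eqrho_iff G m0 fc rtr g r : 0 < fc -> 0 <= g -> 0 < G ->
  (eq_rho G m0 fc rtr g r <->
   r = / (1 + g * (6 * G / fc ^ 2)) * pos_part (rtr - g * (2 * G * m0 / (sqrt 6 * fc)))).
Proof.
  intros hf hg hG. unfold eq_rho.
  assert (hs : 0 < sqrt 6) by (apply sqrt_lt_R0; lra).
  replace (rtr - g * 2 * G * (3 * r / fc ^ 2 + m0 / (sqrt 6 * fc))) with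
    ((rtr - g * (2 * G * m0 / (sqrt 6 * fc))) - (g * (6 * G / fc ^ 2)) * r)
    by (field; lra).
  apply rho_iff. apply Rmult_le_pos; auto. apply Rdiv_le_0_compat; [lra|].
  apply pow_lt; lra.
Qed.

Theorem lemma1 (K G m0 Ag Bg fc ft ptr rtr : R)
  (HK : 0 < K) (HG : 0 < G) (Hm0 : 0 < m0) (HAg : 0 < Ag) (HBg : 0 < Bg)
  (Hfc : 0 < fc) (Hft : 0 < ft) (Hrtr : 0 <= rtr) :
  (forall gamma, 0 <= gamma -> exists! p, eq_p K Ag Bg fc ft ptr gamma p) /\
  (forall gamma, 0 <= gamma -> exists! rho, eq_rho G m0 fc rtr gamma rho) /\
  (forall phat rhohat : R -> R,
     (forall gamma, 0 <= gamma -> eq_p K Ag Bg fc ft ptr gamma (phat gamma)) ->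
     (forall gamma, 0 <= gamma -> eq_rho G m0 fc rtr gamma (rhohat gamma)) ->
     smooth_on_Rplus phat /\
     decreasing_on (fun gamma => 0 <= gamma) phat /\
     decreasing_on (fun gamma => 0 <= gamma < sqrt 6 * fc * rtr / (2 * G * m0)) rhohat /\
     (forall gamma, 0 <= gamma ->
        rhohat gamma = / (1 + gamma * (6 * G / fc ^ 2)) *
                       pos_part (rtr - gamma * (2 * G * m0 / (sqrt 6 * fc))))).
Proof.
  set (b := Bg * fc). set (C := fc * exp (ft / 3 / (Bg * fc)) / (K * Ag)).
  assert (hb : 0 < b) by (unfold b; nra).
  assert (hC : 0 < C).
  { unfold C. apply Rdiv_lt_0_compat; [apply Rmult_lt_0_compat; [lra|apply exp_pos]|nra]. }
  pose proof (kf_c_pos ptr b C hb hC) as hKC.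
  assert (Hsol : forall g p, 0 <= g -> eq_p K Ag Bg fc ft ptr g p -> p = gg ptr b C g).
  { intros g p hg H. apply (eqp_iff K Ag Bg fc ft ptr g p HK HAg HBg Hfc) in H.
    change (kf ptr b C p = - g) in H.
    pose proof (kf_nonpos ptr b C p hb hC ltac:(lra)).
    destruct (gg_spec ptr b C g hb hC ltac:(lra)) as [h1 h2].
    apply (kf_inj ptr b C); auto; lra. }
  assert (Hex : forall g, 0 <= g -> eq_p K Ag Bg fc ft ptr g (gg ptr b C g)).
  { intros g hg. apply (eqp_iff K Ag Bg fc ft ptr g _ HK HAg HBg Hfc). change (kf ptr b C (gg ptr b C g) = - g).
    apply gg_spec; auto; lra. }
  split; [|split].
  - intros g hg. exists (gg ptr b C g). split; [apply Hex; auto|].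
    intros p hp. symmetry. apply Hsol; auto.
  - intros g hg. eexists. split.
    + apply (proj2 (eqrho_iff G m0 fc rtr g _ Hfc hg HG)). reflexivity.
    + intros r hr. symmetry. exact (proj1 (eqrho_iff G m0 fc rtr g r Hfc hg HG) hr).
  - intros phat rhohat Hp Hr.
    assert (Hr' : forall g, 0 <= g -> rhohat g = / (1 + g * (6 * G / fc ^ 2)) *
                       pos_part (rtr - g * (2 * G * m0 / (sqrt 6 * fc)))).
    { intros g hg. apply (proj1 (eqrho_iff G m0 fc rtr g _ Hfc hg HG)); auto. }
    split; [|split; [|split]]; auto.
    + exists (kf ptr b C (ptr + b)), (gg ptr b C). split; [auto|split].
      * intros x hx. symmetry. apply Hsol; auto.
      * intros k x hx. exact (gg_smooth ptr b C hb hC k x hx).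
    + intros x y hx hy hxy. rewrite (Hsol x (phat x)), (Hsol y (phat y)); auto.
      unfold gg. apply Gf_incr; auto; lra.
    + intros x y [hx1 hx2] [hy1 hy2] hxy. rewrite !Hr' by lra.
      assert (hs : 0 < sqrt 6) by (apply sqrt_lt_R0; lra).
      set (q := 2 * G * m0 / (sqrt 6 * fc)).
      assert (hq : 0 < q) by (unfold q; apply Rdiv_lt_0_compat; nra).
      set (u := 6 * G / fc ^ 2).
      assert (hu : 0 < u) by (unfold u; apply Rdiv_lt_0_compat; [lra|apply pow_lt; lra]).
      assert (hT : sqrt 6 * fc * rtr / (2 * G * m0) = rtr / q) by (unfold q; field; repeat split; lra).
      rewrite hT in hy2.
      assert (hyq : y * q < rtr).
      { apply (Rmult_lt_compat_r q) in hy2; auto. unfold Rdiv in hy2.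
        rewrite Rmult_assoc, Rinv_l, Rmult_1_r in hy2; lra. }
      unfold pos_part. rewrite !Rmax_right by nra.
      apply Rlt_trans with (/ (1 + x * u) * (rtr - y * q)).
      * assert (h1 : 0 <= x * u) by (apply Rmult_le_pos; lra).
        assert (h2 : x * u < y * u) by (apply Rmult_lt_compat_r; lra).
        apply Rmult_lt_compat_r; [lra|]. apply Rinv_lt_contravar; [apply Rmult_lt_0_compat|]; lra.
      * assert (h1 : 0 <= x * u) by (apply Rmult_le_pos; lra).
        assert (h2 : x * q < y * q) by (apply Rmult_lt_compat_r; lra).
        apply Rmult_lt_compat_l; [apply Rinv_0_lt_compat; lra| lra].
Qed.
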